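(* Let $k\ge2$ and let $\phi$ be a monotone $[k]$-edge-labeling of $K^{(2)}_n$ that minimizes the number of bad triples among all monotone $[k]$-edge-labelings of $K^{(2)}_n$. Then for every $1\le j\le k-1$, $$|\hat X_{j-1}|+|\hat X_j|\le|\hat X_{j+1}|+|\hat X_{j+2}|+2.$$
   Context: $K^{(2)}_n$ is the complete graph on $[n]$ with its natural order. A $[k]$-edge-labeling $\phi$ assigns to each pair $uv$ ($u<v$) a label $\phi(uv)\in\{1,\dots,k\}$; it is monotone if $\phi(uv)\le\phi(vw)$ whenever $u<v<w$. A triple $u<v<w$ is good if $\phi(uv)<\phi(vw)$ and bad otherwise. Define $\Phi_R(n)=k+1$ and $\Phi_R(v)=\min\{\phi(vw):w>v\}$ for $v<n$. For $0\le i\le k+1$ let $\hat X_i=\{v\in[n]:\Phi_R(v)=i\}$. *)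

(* Defs.v *)
From mathcomp Require Import all_boot.
Set Implicit Arguments. Unset Strict Implicit. Unset Printing Implicit Defensive.

(* Vertex set [n] = {1,...,n} is represented by 'I_n = {0,...,n-1} with its
   natural order (vertex i+1 <-> ordinal i).  An edge-labeling is a function
   phi : 'I_n -> 'I_n -> nat where phi u v is the label of the pair uv for
   u < v; values at u >= v are irrelevant. *)

Definition edge_labeling (k n : nat) (phi : 'I_n -> 'I_n -> nat) : Prop :=
  forall u v : 'I_n, u < v -> 1 <= phi u v <= k.

Definition monotone (n : nat) (phi : 'I_n -> 'I_n -> nat) : Prop :=
  forall u v w : 'I_n, u < v -> v < w -> phi u v <= phi v w.

Definition bad_triple (n : nat) (phi : 'I_n -> 'I_n -> nat) (u v w : 'I_n) : bool :=
  [&& u < v, v < w & ~~ (phi u v < phi v w)].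

Definition num_bad (n : nat) (phi : 'I_n -> 'I_n -> nat) : nat :=
  #|[set t : 'I_n * 'I_n * 'I_n | bad_triple phi t.1.1 t.1.2 t.2]|.

Definition PhiR (k n : nat) (phi : 'I_n -> 'I_n -> nat) (v : 'I_n) : nat :=
  if val v == n.-1 then k.+1
  else \big[minn/k.+1]_(w : 'I_n | v < w) phi v w.

Definition Xhat (k n : nat) (phi : 'I_n -> 'I_n -> nat) (i : nat) : {set 'I_n} :=
  [set v : 'I_n | PhiR k phi v == i].

(* Main.v *)
Require Import Defs.
From mathcomp Require Import all_boot.
From mathcomp Require Import zify.
Set Implicit Arguments. Unset Strict Implicit. Unset Printing Implicit Defensive.

Lemma bigmin_le (I : eqType) (r : seq I) (P : pred I) (F : I -> nat) x w :
  w \in r -> P w -> \big[minn/x]_(i <- r | P i) F i <= F w.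
Proof.
elim: r => // a r IH; rewrite inE big_cons => /orP [/eqP <-|hw] hp.
  by rewrite hp geq_minl.
case: (P a); last exact: IH.
exact: leq_trans (geq_minr _ _) (IH hw hp).
Qed.

Lemma PhiR_le k n (phi : 'I_n -> 'I_n -> nat) (v w : 'I_n) :
  v < w -> PhiR k phi v <= phi v w.
Proof.
move=> vw; rewrite /PhiR.
have -> : (val v == n.-1) = false.
  apply/negbTE/eqP => h; have := ltn_ord w; move: h vw; rewrite /=; lia.
exact: bigmin_le (mem_index_enum _) vw.
Qed.

Lemma PhiR_ex k n (phi : 'I_n -> 'I_n -> nat) (v : 'I_n) :
  edge_labeling k phi -> val v != n.-1 ->
  exists2 w : 'I_n, v < w & phi v w = PhiR k phi v.
Proof.
move=> hl hv.
have hn : n.-1 < n by have := ltn_ord v; lia.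
pose w0 := Ordinal hn.
have vw0 : v < w0 by move: hv (ltn_ord v); rewrite /=; lia.
have hle : PhiR k phi v <= k.
  apply: (leq_trans (PhiR_le k phi vw0)). by case/andP: (hl _ _ vw0).
move: hle; rewrite /PhiR (negbTE hv).
elim/big_ind: _ => //.
- lia.
- move=> x y hx hy /=; case: (leqP x y) => h; [exact: hx | exact: hy].
- by move=> w vw _; exists w.
Qed.


Lemma PhiR_lastE k n (phi : 'I_n -> 'I_n -> nat) (v : 'I_n) :
  val v = n.-1 -> PhiR k phi v = k.+1.
Proof. by move=> h; rewrite /PhiR h eqxx. Qed.

Lemma PhiR_ge k n (phi : 'I_n -> 'I_n -> nat) (u v : 'I_n) :
  edge_labeling k phi -> monotone phi -> u < v -> phi u v <= PhiR k phi v.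
Proof.
move=> hl hm uv.
case: (eqVneq (val v) n.-1) => hv.
  rewrite PhiR_lastE //. by case/andP: (hl _ _ uv) => _ /leq_trans; apply.
have [w vw <-] := PhiR_ex hl hv. exact: hm.
Qed.

Lemma PhiR_mono k n (phi : 'I_n -> 'I_n -> nat) (u v : 'I_n) :
  edge_labeling k phi -> monotone phi -> u < v -> PhiR k phi u <= PhiR k phi v.
Proof.
move=> hl hm uv. exact: (leq_trans (PhiR_le k phi uv) (PhiR_ge hl hm uv)).
Qed.

Lemma PhiR_bounds k n (phi : 'I_n -> 'I_n -> nat) (v : 'I_n) :
  edge_labeling k phi -> val v != n.-1 -> 1 <= PhiR k phi v <= k.
Proof.
move=> hl hv; have [w vw <-] := PhiR_ex hl hv. exact: hl.
Qed.

Lemma PhiR_pos k n (phi : 'I_n -> 'I_n -> nat) (v : 'I_n) :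
  edge_labeling k phi -> 1 <= PhiR k phi v.
Proof.
move=> hl; case: (eqVneq (val v) n.-1) => hv.
  by rewrite PhiR_lastE.
by case/andP: (PhiR_bounds hl hv).
Qed.

Definition pairs n (S : {set 'I_n}) : {set 'I_n * 'I_n} :=
  [set p | (p.1 \in S) && (p.2 \in S) && (p.1 < p.2)].

Lemma pairs_card n (S : {set 'I_n}) : #|pairs S| * 2 + #|S| = #|S| * #|S|.
Proof.
rewrite -cardsX.
set X := setX S S.
pose Q := [set p in X | p.2 < p.1].
pose Dg := [set p in X | p.1 == p.2].
have hP : pairs S = [set p in X | p.1 < p.2].
  by apply/setP => p; rewrite !inE.
have hQ : #|Q| = #|pairs S|.
  rewrite -(card_imset _ (f := fun p : 'I_n * 'I_n => (p.2, p.1))); last first.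
    by move=> [a b] [c d] /= [-> ->].
  apply: eq_card => -[a b]; rewrite !inE /=.
  apply/imsetP/andP => [[[c d]]|[/andP [ha hb] hab]].
    by rewrite !inE /= => /andP [/andP [hc hd] hcd] [-> ->]; rewrite hc hd.
  by exists (b, a); rewrite // !inE /= ha hb.
have hD : #|Dg| = #|S|.
  rewrite -(card_imset _ (f := fun x : 'I_n => (x, x))); last by move=> a b [].
  apply: eq_card => -[a b]; rewrite !inE /=.
  apply/andP/imsetP => [[/andP [ha hb] /eqP hab]|[c hc [-> ->]]].
    by exists a; rewrite // hab.
  by rewrite hc eqxx.
have h1 := cardsID [set p : 'I_n * 'I_n | p.1 < p.2] X.
have h2 := cardsID [set p : 'I_n * 'I_n | p.2 < p.1] (X :\: [set p : 'I_n * 'I_n | p.1 < p.2]).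
have e1 : X :&: [set p : 'I_n * 'I_n | p.1 < p.2] = pairs S.
  by rewrite hP; apply/setP => p; rewrite !inE.
have e2 : (X :\: [set p : 'I_n * 'I_n | p.1 < p.2]) :&: [set p : 'I_n * 'I_n | p.2 < p.1] = Q.
  apply/setP => p; rewrite !inE; case: (ltngtP p.1 p.2) => _; by rewrite ?andbT ?andbF.
have e3 : (X :\: [set p : 'I_n * 'I_n | p.1 < p.2]) :\: [set p : 'I_n * 'I_n | p.2 < p.1] = Dg.
  apply/setP => p; rewrite !inE; case: (ltngtP p.1 p.2) => h; rewrite ?andbT ?andbF //=.
  - case: eqP => [e|_]; last by rewrite andbF.
    by move: h; rewrite e ltnn.
  - case: eqP => [e|_]; last by rewrite andbF.
    by move: h; rewrite e ltnn.
  - by rewrite (val_inj h) eqxx andbT.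
rewrite e2 e3 hQ hD in h2. rewrite e1 in h1. by rewrite -h1 -h2 muln2 -addnn addnA.
Qed.
Lemma t1 Nn Pr rho s y : Pr * 2 + rho = rho * rho -> rho <= s ->
  Nn <= Pr + rho * (s - rho) + rho * y -> Nn * 2 + rho * rho + rho <= 2 * ((s + y) * rho).
Proof.
move=> hr hrs hN.
have [e he] : exists e, s = rho + e by exists (s - rho); lia.
subst s. rewrite addKn in hN. nia.
Qed.
Lemma t2 rho c : 0 < rho -> 2 * (c * rho) + c < c * c + rho * rho + 5 * rho.
Proof.
move=> hp.
case: (leqP c rho) => hcr.
  have [d hd] : exists d, rho = c + d by exists (rho - c); lia.
  subst rho. nia.
have [d ->] : exists d, c = rho + d.+1 by exists (c - rho).-1; lia.
nia.
Qed.
Lemma t3 rho m : rho <= m -> 2 * (m * rho) <= m * m + rho * rho.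
Proof.
move=> h. have [e ->] : exists e, m = rho + e by exists (m - rho); lia. nia.
Qed.
Lemma arith l r c rho s y Pc Pr Nn :
  Pc * 2 + c = c * c -> Pr * 2 + rho = rho * rho -> rho <= r -> 0 < r -> rho <= s ->
  Nn <= Pr + rho * (s - rho) + rho * y ->
  (rho = 0 /\ 2 <= l + c) \/ (s + y + 2 <= l + c) ->
  Nn < l * r + Pc.
Proof.
move=> hc hr hrr hr0 hrs hN hcase.
have hN2 := @t1 Nn Pr rho s y hr hrs hN.
clear hN.
case: (posnP rho) => [h0|hp].
  subst rho. have hN0 : Nn = 0 by lia. subst Nn.
  have hl : 2 <= l + c by case: hcase => [[]|]; lia.
  case: (leqP 2 c) => hc2.
    have : c * 2 <= c * c by rewrite leq_mul2l hc2 orbT.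
    move=> h; have : 1 <= Pc by lia. move=> h1; exact: (leq_trans h1 (leq_addl _ _)).
  have l1 : 1 <= l by lia.
  have : 0 < l * r by rewrite muln_gt0 l1 hr0.
  move=> h; exact: (leq_trans h (leq_addr _ _)).
have hl : s + y + 2 <= l + c by case: hcase => [[]|//]; lia.
clear hcase.
have hlr : l * rho <= l * r by rewrite leq_mul2l hrr orbT.
case: (leqP c (s + y + 2)) => hcs.
  have hl' : s + y + 2 - c <= l by lia.
  have h1 : (s + y + 2 - c) * rho <= l * rho by rewrite leq_mul2r hl' orbT.
  have key := @t2 rho c hp.
  have e1 : (s + y + 2 - c) * rho + c * rho = (s + y) * rho + 2 * rho.
    by rewrite -mulnDl subnK // mulnDl.
  move: hN2 hc key e1 h1 hlr.
  move: (l * r) (l * rho) ((s + y + 2 - c) * rho) ((s+y) * rho) (c * rho) (c * c) (rho * rho) => A B C D E F G.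
  lia.
have key := @t3 rho (s + y) ltac:(lia).
have hcc : (s + y + 3) * (s + y + 2) <= c * (c - 1).
  apply: leq_mul; lia.
have e2 : c * (c - 1) + c = c * c.
  have [c' ->] : exists c', c = c'.+1 by exists c.-1; lia.
  by rewrite subn1 /= mulnS addnC.
move: hN2 hc key hcc e2 hlr.
have e3 : (s + y + 3) * (s + y + 2) = (s + y) * (s + y) + 5 * (s + y) + 6 by nia.
rewrite e3.
move: (l * r) (l * rho) ((s+y) * rho) ((s+y)*(s+y)) (c * (c-1)) (c * c) (rho * rho) => A B C D E F G.
lia.
Qed.

Lemma cardU_le (T : finType) (A B : {set T}) : #|A :|: B| <= #|A| + #|B|.
Proof. by rewrite -cardsUI leq_addr. Qed.

Lemma main k n (phi : 'I_n -> 'I_n -> nat) j :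
  edge_labeling k phi -> monotone phi ->
  (forall psi : 'I_n -> 'I_n -> nat,
      edge_labeling k psi -> monotone psi -> num_bad phi <= num_bad psi) ->
  1 <= j <= k.-1 ->
  #|Xhat k phi j.+1| + #|Xhat k phi j.+2| + 2 < #|Xhat k phi j.-1| + #|Xhat k phi j| ->
  False.
Proof.
move=> hl hm hopt /andP [hj1 hjk] hviol.
pose g := PhiR k phi.
have gmono : forall u v : 'I_n, u < v -> g u <= g v by move=> u v; exact: PhiR_mono.
have gle : forall u v : 'I_n, u <= v -> g u <= g v.
  move=> u v; rewrite leq_eqVlt => /orP [/eqP e|]; last exact: gmono.
  by rewrite (val_inj e).
have glt : forall u v : 'I_n, g u < g v -> u < v.
  move=> u v h; rewrite ltnNge; apply/negP => /gle; lia.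
have gpos : forall v, 1 <= g v by move=> v; exact: PhiR_pos.
have phi_le : forall u v : 'I_n, u < v -> phi u v <= g v by move=> u v; exact: PhiR_ge.
have phi_ge : forall u v : 'I_n, u < v -> g u <= phi u v by move=> u v; exact: PhiR_le.
have gmax : forall v, g v <= k.+1.
  move=> v; case: (eqVneq (val v) n.-1) => hv; first by rewrite /g PhiR_lastE.
  by case/andP: (PhiR_bounds hl hv) => _ h; exact: leqW h.
have glast : forall v : 'I_n, g v <= k -> val v != n.-1.
  by move=> v h; apply/eqP => hv; move: h; rewrite /g PhiR_lastE //; lia.
have [a0 ha0] : exists a0, (g a0 == j.-1) || (g a0 == j).
  have : 0 < #|Xhat k phi j.-1| + #|Xhat k phi j| by lia.
  rewrite addn_gt0 => /orP [] /card_gt0P [a0]; rewrite inE => h; exists a0;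
    by rewrite h ?orbT.
have ha0j : g a0 <= j by case/orP: ha0 => /eqP ->; lia.
pose z := [arg max_(v > a0 | g v <= j) (v : nat)].
have [zj zmax] : g z <= j /\ forall v, g v <= j -> v <= z.
  rewrite /z; case: arg_maxnP => // v hv hmax; split => // u hu; exact: hmax.
set i := g z.
have hz : val z != n.-1 by apply: glast; lia.
have hi1 : 1 <= i by exact: gpos.
have hij : j.-1 <= i.
  have := gle _ _ (zmax _ ha0j); case/orP: ha0 => /eqP; lia.
have hik : i.+1 <= k by lia.
have hright : forall w : 'I_n, z < w -> i < g w.
  move=> w zw; case: (leqP (g w) j) => h; last by lia.
  by have := zmax _ h; lia.
have hleft : forall v : 'I_n, g v <= i -> v <= z by move=> v h; apply: zmax; lia.
pose cond (a b : 'I_n) := (g a == i.+1) && (i.+3 <= g b) && (phi a b == i.+1).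
pose psi (a b : 'I_n) :=
  if b == z then (if g a < i then i else phi a z)
  else if a == z then i.+1
  else if cond a b then i.+2 else phi a b.
have psi_zl : forall x : 'I_n, x < z -> psi x z <= i.
  move=> x xz; rewrite /psi eqxx; case: ifP => // _; exact: phi_le.
have psi_zr : forall w : 'I_n, z < w -> psi z w = i.+1.
  move=> w zw; rewrite /psi eqxx; case: eqP => // e; by move: zw; rewrite e ltnn.
have psi_gen : forall a b : 'I_n, a != z -> b != z -> psi a b = if cond a b then i.+2 else phi a b.
  by move=> a b ha hb; rewrite /psi (negbTE ha) (negbTE hb).
have cond_phi : forall a b : 'I_n, cond a b -> phi a b = i.+1 /\ i.+3 <= g b /\ g a = i.+1.
  by move=> a b /andP [/andP [/eqP h1 h2] /eqP h3].
have neq_lt : forall a b : 'I_n, a < b -> a != b.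
  by move=> a b h; apply/eqP => e; move: h; rewrite e ltnn.
have psi_lab : edge_labeling k psi.
  move=> a b ab.
  case: (eqVneq b z) => [eb|hb].
    rewrite eb in ab *.
    rewrite /psi eqxx; case: ifP => _; first by lia.
    exact: hl.
  case: (eqVneq a z) => [ea|ha].
    rewrite ea in ab *.
    by rewrite psi_zr //; lia.
  rewrite psi_gen //; case: ifP => [/cond_phi [_ [h _]]|_]; last exact: hl.
  have := gmax b; lia.
have psi_ge : forall a b : 'I_n, a != z -> b != z -> phi a b <= psi a b.
  move=> a b ha hb; rewrite psi_gen //; case: ifP => // /cond_phi [-> _]; lia.
have psi_mono : monotone psi.
  move=> a b c ab bc.
  case: (eqVneq b z) => [eb|hb].
    subst b. rewrite psi_zr //. have := psi_zl _ ab; lia.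
  case: (eqVneq a z) => [ea|ha].
    subst a. rewrite psi_zr //.
    have hc : c != z by apply/eqP => e; move: (ltn_trans ab bc); rewrite e ltnn.
    have := psi_ge _ _ hb hc; have := phi_ge _ _ bc; have := hright _ ab; lia.
  case: (eqVneq c z) => [ec|hc].
    subst c. rewrite psi_gen //.
    have hca : cond a b = false.
      apply/negbTE/negP => /cond_phi [_ [_ h]].
      have := hleft a; have := gmono _ _ (ltn_trans ab bc); lia.
    rewrite hca /psi eqxx; case: ifP => h.
      have := phi_le _ _ ab; lia.
    exact: hm.
  rewrite (psi_gen a b) //; case: ifP => [/cond_phi [_ [h _]]|_].
    have := psi_ge _ _ hb hc; have := phi_ge _ _ bc; lia.
  have := psi_ge _ _ hb hc; have := hm _ _ _ ab bc; lia.
pose L := [set u : 'I_n | (u < z) && (phi u z == i)].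
pose R := [set w : 'I_n | (z < w) && (phi z w == i)].
pose D1 := (fun p : 'I_n * 'I_n => (p.1, z, p.2)) @: setX L R.
pose PR := [set u : 'I_n | (g u == i.-1) && (phi u z == i.-1)].
pose D2 := (fun p : 'I_n * 'I_n => (p.1, p.2, z)) @: pairs PR.
pose WR := [set w : 'I_n | (g w == i.+1) && (phi z w == i)].
pose N2 := [set p : 'I_n * 'I_n | (p.1 \in WR) && (p.1 < p.2) && (g p.2 <= i.+2)].
pose N := (fun p : 'I_n * 'I_n => (z, p.1, p.2)) @: N2.
pose BS (f : 'I_n -> 'I_n -> nat) :=
  [set t : 'I_n * 'I_n * 'I_n | bad_triple f t.1.1 t.1.2 t.2].
have hPR : forall u : 'I_n, u \in PR -> u < z /\ g u = i.-1 /\ phi u z = i.-1.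
  move=> u; rewrite inE => /andP [/eqP h1 /eqP h2]; split => //.
  apply: glt; rewrite -/i; lia.
have D1P : forall t, t \in D1 -> (t \in BS phi) && (t \notin BS psi).
  move=> t /imsetP [[u w]]; rewrite !inE /= => /andP [/andP [uz /eqP hu] /andP [zw /eqP hw]] ->.
  rewrite /bad_triple uz zw hu hw ltnn /=.
  rewrite psi_zr //; have := psi_zl _ uz; lia.
have D2P : forall t, t \in D2 -> (t \in BS phi) && (t \notin BS psi).
  move=> t /imsetP [[u w]]; rewrite !inE /= => /andP [/andP [hu hw] uw] ->.
  have [uz [gu pu]] := hPR u ltac:(by rewrite inE); have [wz [gw pw]] := hPR w ltac:(by rewrite inE).
  rewrite /bad_triple uw wz pw /=.
  have := phi_ge _ _ uw; rewrite gu => h1.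
  rewrite -leqNgt h1 /=.
  rewrite /psi eqxx gw (_ : i.-1 < i) ?leqnn; last by lia.
  have uz' : u != z by apply: neq_lt.
  have wz' : w != z by apply: neq_lt.
  rewrite (negbTE wz') (negbTE uz').
  have -> : cond u w = false by apply/negbTE/negP => /cond_phi [_ [_ h]]; lia.
  have := phi_le _ _ uw; lia.
have D12 : D1 :&: D2 = set0.
  apply/setP => t; rewrite !inE; apply/negP => /andP [] /imsetP [[u w] _ ->] /imsetP [[u' w'] hp] [_ e1 e2].
  move: hp; rewrite inE /= => /andP [/andP [_ hw'] _].
  have [h _] := hPR _ hw'; by move: h; rewrite -e1 ltnn.
have C4 : forall a b c : 'I_n, bad_triple psi a b c -> bad_triple phi a b c \/ (a = z /\ (b, c) \in N2).
  move=> a b c /and3P [ab bc hbad].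
  case: (eqVneq b z) => [eb|hb].
    subst b; move: hbad; rewrite psi_zr // -leqNgt; have := psi_zl _ ab; lia.
  case: (eqVneq a z) => [ea|ha].
    subst a.
    have hc : c != z by apply/eqP => e; move: (ltn_trans ab bc); rewrite e ltnn.
    move: hbad; rewrite psi_zr // psi_gen // -leqNgt.
    case: ifP => [_|hcond]; first by lia.
    move=> hpb.
    have gb := hright _ ab; have pb := phi_ge _ _ bc.
    have gbi : g b = i.+1 by lia.
    have pbc : phi b c = i.+1 by lia.
    have gc : g c <= i.+2.
      move: hcond; rewrite /cond gbi pbc !eqxx /= andbT; lia.
    have := phi_le _ _ ab; have := phi_ge _ _ ab; rewrite -/i => h1 h2.
    case: (eqVneq (phi z b) i.+1) => hzb.
      by left; rewrite /bad_triple ab bc hzb pbc ltnn.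
    right; split => //; rewrite !inE /= bc gc andbT gbi eqxx /=; apply/eqP; lia.
  case: (eqVneq c z) => [ec|hc].
    subst c; move: hbad; rewrite psi_gen //.
    have -> : cond a b = false.
      apply/negbTE/negP => /cond_phi [_ [_ h]].
      have := hleft a; have := gmono _ _ (ltn_trans ab bc); lia.
    rewrite /psi eqxx; case: ifP => h.
      have := phi_le _ _ ab; lia.
    by move=> hh; left; rewrite /bad_triple ab bc hh.
  move: hbad; rewrite (psi_gen a b) //; case: ifP => [/cond_phi [_ [h _]]|_].
    have := psi_ge _ _ hb hc; have := phi_ge _ _ bc; lia.
  have := psi_ge _ _ hb hc => h1 h2; left; rewrite /bad_triple ab bc /=; lia.
have hD1 : #|D1| = #|L| * #|R|.
  rewrite card_imset ?cardsX //; by move=> [a b] [c d] /= [-> ->].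
have hD2 : #|D2| = #|pairs PR|.
  rewrite card_imset //; by move=> [a b] [c d] /= [-> ->].
have hN : #|N| <= #|N2| by apply: leq_imset_card.
have WRsub : WR \subset Xhat k phi i.+1.
  by apply/subsetP => w; rewrite !inE => /andP [].
have WRR : WR \subset R.
  apply/subsetP => w; rewrite !inE => /andP [/eqP gw ->]; rewrite andbT.
  apply: glt; rewrite -/i gw; lia.
have PRsub : PR \subset Xhat k phi i.-1.
  by apply/subsetP => w; rewrite !inE => /andP [].
have hN2 : #|N2| <= #|pairs WR| + #|WR| * (#|Xhat k phi i.+1| - #|WR|)
                   + #|WR| * #|Xhat k phi i.+2|.
  have sub : N2 \subset pairs WR :|: setX WR (Xhat k phi i.+1 :\: WR)
                        :|: setX WR (Xhat k phi i.+2).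
    apply/subsetP => -[b c]; rewrite !inE /= => /andP [/andP [hb bc] gc].
    move: (hb) => /andP [/eqP gb hzb].
    have := gmono _ _ bc; rewrite gb => gc'.
    rewrite hzb eqxx bc /= -/(g c).
    case: (eqVneq (g c) i.+2) => [->|hne]; first by rewrite !orbT.
    have gci : g c = i.+1 by lia.
    by rewrite gci eqxx /=; case: (phi z c == i).
  apply: (leq_trans (subset_leq_card sub)).
  apply: leq_trans (cardU_le _ _) _; rewrite cardsX.
  apply: leq_add (leqnn _); apply: leq_trans (cardU_le _ _) _.
  by rewrite cardsX cardsD (setIidPr WRsub).
have hR0 : 0 < #|R|.
  have [w zw pw] := PhiR_ex hl hz.
  apply/card_gt0P; exists w; rewrite inE zw /=; apply/eqP; exact: pw.
have hzX : z \in Xhat k phi i by rewrite inE.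
have hL : (#|Xhat k phi i| - 1) + (#|Xhat k phi i.-1| - #|PR|) <= #|L|.
  have sub : (Xhat k phi i :\ z) :|: (Xhat k phi i.-1 :\: PR) \subset L.
    apply/subsetP => v; rewrite !inE -/(g v) => /orP [/andP [vz /eqP gv]|/andP [hv /eqP gv]].
      have vz' : v < z.
        have := hleft v; rewrite gv => /(_ (leqnn _)).
        rewrite leq_eqVlt => /orP [/eqP e|//]; by move: vz; rewrite (val_inj e) eqxx.
      rewrite vz' /=; have := phi_le _ _ vz'; have := phi_ge _ _ vz'; rewrite gv -/i; lia.
    have vz' : v < z by apply: glt; rewrite gv -/i; lia.
    rewrite vz' /=; have := phi_le _ _ vz'; have := phi_ge _ _ vz'; rewrite gv -/i.
    move: hv; rewrite gv eqxx /=; lia.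
  apply: leq_trans (subset_leq_card sub).
  have u := cardsUI (Xhat k phi i :\ z) (Xhat k phi i.-1 :\: PR).
  have e0 : (Xhat k phi i :\ z) :&: (Xhat k phi i.-1 :\: PR) = set0.
    apply/setP => v; rewrite !inE; apply/negP => /andP [/andP [_ /eqP h1] /andP [_ /eqP h2]]; lia.
  rewrite e0 cards0 addn0 in u.
  rewrite u (cardsD (Xhat k phi i.-1) PR) (setIidPr PRsub).
  have h := cardsD1 z (Xhat k phi i); rewrite hzX add1n in h.
  rewrite h subn1 /=; exact: leqnn.
have hsub : BS psi \subset (BS phi :\: (D1 :|: D2)) :|: N.
  apply/subsetP => -[[a b] c]; rewrite inE /= => hb.
  have nD : ((a, b), c) \notin D1 :|: D2.
    apply/negP => /setUP [/D1P|/D2P] /andP [_]; by rewrite inE /= hb.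
  case: (C4 _ _ _ hb) => [hphi|[ea hN2']].
    by apply/setUP; left; apply/setDP; split => //; rewrite inE.
  apply/setUP; right; apply/imsetP; exists (b, c) => //=; by rewrite ea.
have hc1 : #|BS psi| <= #|BS phi :\: (D1 :|: D2)| + #|N|.
  exact: leq_trans (subset_leq_card hsub) (cardU_le _ _).
have hDsub : D1 :|: D2 \subset BS phi.
  by apply/subsetP => t /setUP [/D1P|/D2P] /andP [].
have hc2 : #|BS phi :\: (D1 :|: D2)| + #|D1 :|: D2| = #|BS phi|.
  have h := cardsID (D1 :|: D2) (BS phi); rewrite (setIidPr hDsub) in h.
  by rewrite addnC.
have hc3 : #|D1 :|: D2| = #|D1| + #|D2|.
  by rewrite -cardsUI D12 cards0 addn0.
have hPRp : #|PR| <= #|Xhat k phi i.-1| := subset_leq_card PRsub.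
have hq : 0 < #|Xhat k phi i| by apply/card_gt0P; exists z.
have hcase : (#|WR| = 0 /\ 2 <= #|L| + #|PR|) \/
             (#|Xhat k phi i.+1| + #|Xhat k phi i.+2| + 2 <= #|L| + #|PR|).
  case: (eqVneq i j) => [eij|nij].
    right; rewrite eij in hL hPRp hq *; lia.
  left.
  have eji : j = i.+1 by lia.
  have X0 : Xhat k phi j = set0.
    apply/setP => v; rewrite !inE; apply/negP => /eqP gv.
    have gv' : g v = j by [].
    have := gle _ _ (zmax v ltac:(by rewrite gv')); lia.
  have hW0 : #|WR| = 0.
    apply/eqP; rewrite -leqn0; apply: leq_trans (subset_leq_card WRsub) _.
    by rewrite -eji X0 cards0.
  split => //.
  move: hviol; rewrite X0 cards0 addn0 eji /= => hv.
  have h3 : 2 < #|Xhat k phi i| := leq_ltn_trans (leq_addl _ _) hv.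
  have t1 : #|Xhat k phi i| - 1 <= #|L| by lia.
  apply: leq_trans (leq_addr #|PR| _). move: (#|L|) (#|Xhat k phi i|) t1 h3 => a b; lia.
have harith : #|N| < #|L| * #|R| + #|pairs PR|.
  apply: (@arith _ _ _ #|WR| #|Xhat k phi i.+1| #|Xhat k phi i.+2| _ #|pairs WR|).
  - exact: pairs_card.
  - exact: pairs_card.
  - exact: subset_leq_card WRR.
  - exact: hR0.
  - exact: subset_leq_card WRsub.
  - exact: leq_trans hN hN2.
  - exact: hcase.
have hopt' := hopt psi psi_lab psi_mono.
have e1 : num_bad phi = #|BS phi| by [].
have e2 : num_bad psi = #|BS psi| by [].
rewrite e1 e2 in hopt'.
rewrite -hc2 hc3 hD1 hD2 in hopt'.
lia.
Qed.


Theorem corollary4p10 (k n : nat) (phi : 'I_n -> 'I_n -> nat) :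
  2 <= k ->
  edge_labeling k phi -> monotone phi ->
  (forall psi : 'I_n -> 'I_n -> nat,
      edge_labeling k psi -> monotone psi -> num_bad phi <= num_bad psi) ->
  forall j : nat, 1 <= j <= k.-1 ->
    #|Xhat k phi j.-1| + #|Xhat k phi j| <=
    #|Xhat k phi j.+1| + #|Xhat k phi j.+2| + 2.
Proof.
move=> _ hl hm hopt j hj.
rewrite leqNgt; apply/negP => hv.
exact: (main hl hm hopt hj hv).
Qed.
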